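(* The proof system $\mathbf{DFD}$ is sound with respect to general relational models (every $\mathbf{DFD}$-provable formula is true at every state of every general relational model), and the proof system $\mathbf{DFD}^{\neq\emptyset}$ is sound with respect to general relational models of $\mathsf{DFD}^{\neq\emptyset}$.
   Context: Vocabulary: finite set $V$ of basic variables and predicate symbols with arities. Terms: $v\in V$, and $\bigcirc x$ for a term $x$. Formulas of $\mathcal{L}$: $P(x_1,\dots,x_k)$, $\neg\varphi$, $\varphi\wedge\psi$, $\bigcirc\varphi$, $\mathsf{D}_X\varphi$, $D_Xy$ ($X$ a finite, possibly empty, set of terms). $\mathcal{L}^{\neq\emptyset}$: sublanguage where all subscripts $X$ are non-empty. Abbreviations: $\bigcirc X=\{\bigcirc x:x\in X\}$, $D_XY:=\bigwedge_{y\in Y}D_Xy$ for finite $Y$, $\widehat{\mathsf{D}}_X=\neg\mathsf{D}_X\neg$. Proof system $\mathbf{DFD}$: all propositional tautologies and modus ponens; $\bigcirc(\varphi\to\psi)\to(\bigcirc\varphi\to\bigcirc\psi)$; $\bigcirc\neg\varphi\leftrightarrow\neg\bigcirc\varphi$; $\mathsf{D}_X(\varphi\to\psi)\to(\mathsf{D}_X\varphi\to\mathsf{D}_X\psi)$; $P(x_1,\dots,x_n)\to\mathsf{D}_{\{x_1,\dots,x_n\}}P(x_1,\dots,x_n)$; $D_Xy\to\mathsf{D}_XD_Xy$; $\mathsf{D}_X\varphi\to\varphi$; $\mathsf{D}_X\varphi\to\mathsf{D}_X\mathsf{D}_X\varphi$; $\neg\mathsf{D}_X\varphi\to\mathsf{D}_X\neg\mathsf{D}_X\varphi$;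 rule: from $\varphi$ infer $\mathsf{D}_X\varphi$; $D_Xx$ for $x\in X$; $D_XY\wedge D_YZ\to D_XZ$; $D_V\bigcirc v$ for $v\in V$; $D_XY\wedge\mathsf{D}_Y\varphi\to\mathsf{D}_X\varphi$; $\mathsf{D}_\emptyset\varphi\to\bigcirc\varphi$; $\bigcirc P(x_1,\dots,x_k)\leftrightarrow P(\bigcirc x_1,\dots,\bigcirc x_k)$; $\bigcirc\mathsf{D}_X\varphi\to\mathsf{D}_{\bigcirc X}\bigcirc\varphi$; $\bigcirc D_Xy\to D_{\bigcirc X}\bigcirc y$. $\mathbf{DFD}^{\neq\emptyset}$: the restriction of all axioms and rules of $\mathbf{DFD}$ to formulas of $\mathcal{L}^{\neq\emptyset}$, plus the rule: from $\varphi$ infer $\bigcirc\varphi$. A general relational model is $(W,g,=_X,\|\cdot\|)_X$: $W$ non-empty; $g:W\to W$; for each finite set $X$ of terms a binary relation $=_X$ on $W$; $\|\cdot\|$ maps atoms $P(x_1,\dots,x_n)$ and $D_Xy$ to subsets of $W$ (write $s\vDash\alpha$ for $s\in\|\alpha\|$, and $s\vDash D_XY$ iff $s\vDash D_Xy$ for all $y\in Y$), satisfying: (C1) $=_\emptyset$ is universal; (C2) each $=_X$ is an equivalence relation; (C3) $s\vDash D_Xx$ for $x\in X$; if $s\vDash D_XY$ and $s\vDash D_YZ$ then $s\vDash D_XZ$; $s\vDash D_V\bigcirc x$ for all terms $x$; (C4) if $s=_Xw$ and $s\vDash D_XY$ then $w\vDash D_XY$ and $s=_Yw$; (C5) if $s=_Xw$,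 $s\vDash P(x_1,\dots,x_n)$ with $x_i\in X$, then $w\vDash P(x_1,\dots,x_n)$; (C6) $s\vDash P(\bigcirc x_1,\dots,\bigcirc x_n)$ iff $g(s)\vDash P(x_1,\dots,x_n)$; (C7) if $s=_{\bigcirc X}w$ then $g(s)=_Xg(w)$; (C8) if $g(s)\vDash D_XY$ then $s\vDash D_{\bigcirc X}\bigcirc Y$. Truth: atoms via $\|\cdot\|$; Boolean as usual; $s\vDash\bigcirc\varphi$ iff $g(s)\vDash\varphi$; $s\vDash\mathsf{D}_X\varphi$ iff all $t$ with $s=_Xt$ satisfy $\varphi$. A general relational model of $\mathsf{DFD}^{\neq\emptyset}$ is the same but with relations $=_X$ and atoms $D_Xy$ only for non-empty $X$, condition C1 dropped, and C2–C8 required for non-empty sets only; it interprets $\mathcal{L}^{\neq\emptyset}$. *)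

(* Defs.v *)
From mathcomp Require Import all_boot.
From mathcomp Require Import finmap.

Set Implicit Arguments.
Unset Strict Implicit.
Unset Printing Implicit Defensive.

Local Open Scope fset_scope.

Section DFDLogic.

Variables (Var Pred : finType) (ar : Pred -> nat).

(* Terms: v and (next x).  The term  next^n v  is encoded as the pair (n, v). *)
Definition term : Type := (nat * Var)%type.
Definition tvar (v : Var) : term := (0, v).
Definition tnext (x : term) : term := (x.1.+1, x.2).

Definition Vset : {fset term} := [fset tvar v | v in enum Var].
Definition nextset (X : {fset term}) : {fset term} := [fset tnext x | x in X].

(* Formulas.  FTop is the truth constant (used only as the empty conjunction,
   needed for D_X Y with Y empty). *)
Inductive form : Type :=
| FTop
| FPred (P : Pred) (xs : (ar P).-tuple term)
| FNeg (f : form)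
| FAnd (f g : form)
| FNext (f : form)
| FBox (X : {fset term}) (f : form)
| FDep (X : {fset term}) (y : term).

Definition fimp (f g : form) : form := FNeg (FAnd f (FNeg g)).
Definition fiff (f g : form) : form := FAnd (fimp f g) (fimp g f).
Definition bigand (fs : seq form) : form := foldr FAnd FTop fs.
Definition fDeps (X Y : {fset term}) : form := bigand [seq FDep X y | y <- Y].

Fixpoint ne (f : form) : bool :=
  match f with
  | FTop | FPred _ _ => true
  | FNeg f | FNext f => ne f
  | FAnd f g => ne f && ne g
  | FBox X f => (X != fset0) && ne f
  | FDep X _ => X != fset0
  end.

(* Propositional tautologies: true under every Boolean valuation of the
   non-Boolean subformulas. *)
Fixpoint beval (val : form -> bool) (f : form) : bool :=
  match f with
  | FTop => true
  | FNeg f => ~~ beval val f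
  | FAnd f g => beval val f && beval val g
  | _ => val f
  end.
Definition taut (f : form) : Prop := forall val, beval val f.

Inductive axiom : form -> Prop :=
| ax_taut f : taut f -> axiom f
| ax_Knext f g :
    axiom (fimp (FNext (fimp f g)) (fimp (FNext f) (FNext g)))
| ax_nextneg f : axiom (fiff (FNext (FNeg f)) (FNeg (FNext f)))
| ax_KD X f g :
    axiom (fimp (FBox X (fimp f g)) (fimp (FBox X f) (FBox X g)))
| ax_predD P (xs : (ar P).-tuple term) :
    axiom (fimp (FPred xs) (FBox [fset x | x in val xs] (FPred xs)))
| ax_depD X y : axiom (fimp (FDep X y) (FBox X (FDep X y)))
| ax_T X f : axiom (fimp (FBox X f) f)
| ax_4 X f : axiom (fimp (FBox X f) (FBox X (FBox X f)))
| ax_5 X f : axiom (fimp (FNeg (FBox X f)) (FBox X (FNeg (FBox X f))))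
| ax_refl X x : x \in X -> axiom (FDep X x)
| ax_trans X Y Z : axiom (fimp (FAnd (fDeps X Y) (fDeps Y Z)) (fDeps X Z))
| ax_Vnext v : axiom (FDep Vset (tnext (tvar v)))
| ax_transfer X Y f : axiom (fimp (FAnd (fDeps X Y) (FBox Y f)) (FBox X f))
| ax_empty f : axiom (fimp (FBox fset0 f) (FNext f))
| ax_nextpred P (xs : (ar P).-tuple term) :
    axiom (fiff (FNext (FPred xs)) (FPred (map_tuple tnext xs)))
| ax_nextbox X f : axiom (fimp (FNext (FBox X f)) (FBox (nextset X) (FNext f)))
| ax_nextdep X y : axiom (fimp (FNext (FDep X y)) (FDep (nextset X) (tnext y))).

Inductive DFD : form -> Prop :=
| DFD_ax f : axiom f -> DFD f
| DFD_mp f g : DFD (fimp f g) -> DFD f -> DFD g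
| DFD_nec X f : DFD f -> DFD (FBox X f).

Inductive DFDne : form -> Prop :=
| DFDne_ax f : axiom f -> ne f -> DFDne f
| DFDne_mp f g : DFDne (fimp f g) -> DFDne f -> DFDne g
| DFDne_nec X f : X != fset0 -> DFDne f -> DFDne (FBox X f)
| DFDne_necnext f : DFDne f -> DFDne (FNext f).

Record rstruct : Type := RStruct {
  W : Type;
  gnext : W -> W;
  eqr : {fset term} -> W -> W -> Prop;
  valP : forall P : Pred, (ar P).-tuple term -> W -> Prop;
  valD : {fset term} -> term -> W -> Prop
}.
Arguments gnext r _ : clear implicits, rename.
Arguments eqr r _ _ _ : clear implicits, rename.
Arguments valP r {P} _ _ : rename.
Arguments valD r _ _ _ : clear implicits, rename.

Fixpoint sat (M : rstruct) (s : W M) (f : form) : Prop :=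
  match f with
  | FTop => True
  | FPred P xs => valP M xs s
  | FNeg f => ~ @sat M s f
  | FAnd f g => @sat M s f /\ @sat M s g
  | FNext f => @sat M (gnext M s) f
  | FBox X f => forall t, eqr M X s t -> @sat M t f
  | FDep X y => valD M X y s
  end.
Arguments sat M s f : clear implicits.

Definition satDeps (M : rstruct) (s : W M) (X Y : {fset term}) : Prop :=
  forall y, y \in Y -> valD M X y s.
Arguments satDeps M s X Y : clear implicits.

(* Conditions C2--C8, required for the subscripts satisfying [ok]
   ([ok] = all sets for general relational models, [ok] = non-empty sets for
   models of DFD^{<>empty}). *)
Record conds (ok : {fset term} -> bool) (M : rstruct) : Prop := {
  C2_refl : forall X s, ok X -> eqr M X s s;
  C2_sym : forall X s w, ok X -> eqr M X s w -> eqr M X w s;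
  C2_trans : forall X s w u, ok X -> eqr M X s w -> eqr M X w u -> eqr M X s u;
  C3_refl : forall X x s, ok X -> x \in X -> valD M X x s;
  C3_trans : forall X Y Z s, ok X -> ok Y ->
    satDeps M s X Y -> satDeps M s Y Z -> satDeps M s X Z;
  C3_next : forall x s, ok Vset -> valD M Vset (tnext x) s;
  C4 : forall X Y s w, ok X -> ok Y -> eqr M X s w -> satDeps M s X Y ->
    satDeps M w X Y /\ eqr M Y s w;
  C5 : forall X P (xs : (ar P).-tuple term) s w, ok X -> eqr M X s w ->
    valP M xs s -> (forall x, x \in val xs -> x \in X) -> valP M xs w;
  C6 : forall P (xs : (ar P).-tuple term) s,
    valP M (map_tuple tnext xs) s <-> valP M xs (gnext M s);
  C7 : forall X s w, ok X -> eqr M (nextset X) s w ->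
    eqr M X (gnext M s) (gnext M w);
  C8 : forall X Y s, ok X -> satDeps M (gnext M s) X Y ->
    satDeps M s (nextset X) (nextset Y)
}.

Definition is_grm (M : rstruct) : Prop :=
  (forall s w, eqr M fset0 s w) /\ conds (fun _ => true) M.

(* General relational models of DFD^{<>empty}: C2--C8 for non-empty sets only
   (the components for the empty set are irrelevant junk). *)
Definition is_grm_ne (M : rstruct) : Prop :=
  conds (fun X => X != fset0) M.

End DFDLogic.

Arguments sat {Var Pred ar} M s f.
Arguments satDeps {Var Pred ar} M s X Y.
Arguments gnext {Var Pred ar} r _ : rename.
Arguments eqr {Var Pred ar} r _ _ _ : rename.
Arguments valD {Var Pred ar} r _ _ _ : rename.
Arguments valP {Var Pred ar} r {P} _ _ : rename.

(* Main.v *)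
Require Import Defs.
From mathcomp Require Import all_boot.
From mathcomp Require Import finmap.
From Stdlib Require Import Classical ClassicalDescription.

Set Implicit Arguments.
Unset Strict Implicit.
Local Open Scope fset_scope.

Section Sound.
Variables (Var Pred : finType) (ar : Pred -> nat).
Implicit Types (f g : form Var ar) (M : rstruct Var ar).

Lemma sat_bigand_dep M s X (l : seq (term Var)) :
  sat M s (bigand [seq @FDep Var Pred ar X y | y <- l]) <-> (forall y, y \in l -> valD M X y s).
Proof.
elim: l => [|a l IH]; first by split => // _ y; rewrite in_nil.
split.
- move=> [Ha Hl] y; rewrite inE => /orP [/eqP -> //|Hy]; exact: (proj1 IH Hl y Hy).
- move=> H; split; first (by apply: H; rewrite inE eqxx).
  apply: (proj2 IH) => y Hy; apply: H; by rewrite inE Hy orbT.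
Qed.

Lemma sat_fDeps M s X Y : sat M s (@fDeps Var Pred ar X Y) <-> satDeps M s X Y.
Proof. exact: sat_bigand_dep. Qed.

Lemma ne_fDeps X Y y : ne (@fDeps Var Pred ar X Y) -> y \in Y -> X != fset0.
Proof.
rewrite /fDeps => H Hy.
have : y \in (Y : seq (term Var)) := Hy.
move: H; elim: (Y : seq (term Var)) => [|a l IH] //.
move=> /andP [Ha Hl]; rewrite inE => /orP [_|]; first exact Ha.
exact: IH.
Qed.

Lemma fset1_neq0 (y : term Var) : [fset y] != fset0.
Proof.
apply/eqP => h. have: y \in [fset y] by rewrite inE.
by rewrite h inE.
Qed.

Definition val_of M s : form Var ar -> bool :=
  fun g => if excluded_middle_informative (sat M s g) then true else false.

Lemma beval_sat M s f : beval (@val_of M s) f <-> sat M s f.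
Proof.
elim: f => //=;
  try (intros; rewrite /val_of; case: excluded_middle_informative => h; split => //; fail).
- move=> f IH. split.
  + move=> /negP H Hs; apply: H; exact/IH.
  + move=> H; apply/negP => Hb; apply: H; exact/IH.
- move=> f IHf g IHg; split.
  + by move=> /andP [a b]; split; [apply/IHf|apply/IHg].
  + by move=> [a b]; apply/andP; split; [apply/IHf|apply/IHg].
Qed.

Lemma sat_imp M s f g : sat M s (fimp f g) <-> (sat M s f -> sat M s g).
Proof.
rewrite /fimp /=; split.
- move=> H Hf; apply: NNPP => Hg; exact: H.
- by move=> H [Hf Hg]; apply: Hg; apply: H.
Qed.


Ltac nesolve :=
  let H := fresh "H" in
  move=> H; simpl in H;
  repeat match goal with
         | H : is_true (_ && _) |- _ => case/andP: H => ? ?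
         end;
  solve [ assumption
        | match goal with
          | H : is_true (ne (fDeps _ _ _)), Hz : is_true (_ \in _) |- _ => exact: ne_fDeps H Hz
          end ].

Lemma ax_sound ok M (HC : conds ok M) (Hne : forall X, X != fset0 -> ok X)
  (G : bool) (HG : G -> forall X, ok X) (HG1 : G -> forall s w, eqr M fset0 s w) f :
  axiom f -> (G || ne f) -> forall s, sat M s f.
Proof.
have getok : forall X (P : bool), G || P -> (P -> X != fset0) -> ok X.
  move=> X P; case: G HG {HG1} => [HG _ _|HG /= HP H]; first exact: HG.
  exact: Hne (H HP).
case: HC => R S T C3r C3t C3n C4 C5 C6 C7 C8.
case=> {f}.
- move=> f Ht _ s; apply: (proj1 (@beval_sat M s f)); exact: Ht.
- move=> f g _ s; apply/sat_imp => H1; apply/sat_imp => H2.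
  exact: (proj1 (sat_imp _ _ _) H1).
- move=> f _ s; split; apply/sat_imp => //=.
- move=> X f g Hok s; apply/sat_imp => H1; apply/sat_imp => H2 t Ht.
  exact: (proj1 (sat_imp _ _ _) (H1 t Ht) (H2 t Ht)).
- move=> P xs Hok s; apply/sat_imp => /= H t Ht.
  have okX : ok [fset x | x in val xs].
    apply: (getok _ _ Hok); nesolve.
  apply: C5 okX Ht H _ => x Hx; exact: in_imfset.
- move=> X y Hok s; apply/sat_imp => /= H t Ht.
  have okX : ok X by apply: (getok _ _ Hok); nesolve.
  have okY : ok [fset y] by apply: (getok _ _ Hok) => _; exact: fset1_neq0.
  have Hd : satDeps M s X [fset y] by move=> z; rewrite inE => /eqP ->.
  by have [h _] := C4 _ _ _ _ okX okY Ht Hd; apply: h; rewrite inE.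
- move=> X f Hok s; apply/sat_imp => /= H; apply: H.
  apply: R; apply: (getok _ _ Hok); nesolve.
- move=> X f Hok s; apply/sat_imp => /= H t Ht u Hu.
  have okX : ok X by apply: (getok _ _ Hok); nesolve.
  exact: H (T _ _ _ _ okX Ht Hu).
- move=> X f Hok s; apply/sat_imp => /= H t Ht Ht'; apply: H => u Hu.
  have okX : ok X by apply: (getok _ _ Hok); nesolve.
  apply: Ht'; apply: T okX (S _ _ _ okX Ht) Hu.
- move=> X x Hx Hok s /=.
  apply: C3r Hx; apply: (getok _ _ Hok); nesolve.
- move=> X Y Z Hok s; apply/sat_imp => /= [[/sat_fDeps H1 /sat_fDeps H2]].
  apply/sat_fDeps => z Hz.
  have okX : ok X.
    apply: (getok _ _ Hok); nesolve.
  have okY : ok Y.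
    apply: (getok _ _ Hok); nesolve.
  exact: C3t okX okY H1 H2 z Hz.
- move=> v Hok s /=; apply: C3n; apply: (getok _ _ Hok); nesolve.
- move=> X Y f Hok s; apply/sat_imp => /= [[/sat_fDeps H1 H2]] t Ht.
  have okX : ok X by apply: (getok _ _ Hok); nesolve.
  have okY : ok Y by apply: (getok _ _ Hok); nesolve.
  have [_ h] := C4 _ _ _ _ okX okY Ht H1; exact: H2 h.
- move=> f Hok s; apply/sat_imp => /= H; apply: H.
  move: Hok; case: G HG1 {getok HG} => [HG1 _|_]; first exact: HG1.
  by case/andP => /andP [/eqP h _] _; case: h.
- move=> P xs _ s; split; apply/sat_imp => /= H; apply/C6 => //.
- move=> X f Hok s; apply/sat_imp => /= H t Ht; apply: H.
  have okX : ok X by apply: (getok _ _ Hok); nesolve.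
  exact: C7 okX Ht.
- move=> X y Hok s; apply/sat_imp => /= H.
  have okX : ok X by apply: (getok _ _ Hok); nesolve.
  have Hd : satDeps M (gnext M s) X [fset y] by move=> z; rewrite inE => /eqP ->.
  apply: (C8 _ _ _ okX Hd); apply: in_imfset.
  by rewrite inE.
Qed.

End Sound.

Theorem fact2p4 (Var Pred : finType) (ar : Pred -> nat) :
  (forall f : form Var ar, DFD f ->
     forall M : rstruct Var ar, is_grm M -> forall s : W M, sat M s f) /\
  (forall f : form Var ar, DFDne f ->
     forall M : rstruct Var ar, is_grm_ne M -> forall s : W M, sat M s f).
Proof.
split.
- move=> f; elim => {f} [f Hax|f g _ IH1 _ IH2|X f _ IH] M HM s.
  + case: HM => H1 HC.
    exact: (ax_sound (M:=M) (ok:=fun _ => true) HC (fun _ _ => erefl) (G:=true) (fun _ _ => erefl) (fun _ => H1) Hax erefl s).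
  + exact: (proj1 (sat_imp _ _ _) (IH1 M HM s) (IH2 M HM s)).
  + move=> t _; exact: IH.
- move=> f; elim => {f} [f Hax Hne|f g _ IH1 _ IH2|X f _ _ IH|f _ IH] M HM s.
  + exact: (ax_sound (M:=M) (ok:=fun X => X != fset0) HM (fun _ h => h) (G:=false) (fun h => match notF h with end) (fun h => match notF h with end) Hax Hne s).
  + exact: (proj1 (sat_imp _ _ _) (IH1 M HM s) (IH2 M HM s)).
  + move=> t _; exact: IH.
  + exact: IH.
Qed.
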